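(* Let $n\ge 2$, $\sigma\ge 0$, let $z\in\mathbb{C}^n$ satisfy $|z_1|=\cdots=|z_n|=1$, let $W\in\mathbb{C}^{n\times n}$ be $z$-discordant, and let $C=zz^*+\sigma W$. If $x\in\mathbb{C}^n$ satisfies $\|x\|_2^2=n$ and $z^*Cz\le x^*Cx$ (in particular, if $x$ is a global optimizer of $\max x^*Cx$ subject to $|x_1|=\cdots=|x_n|=1$), then \[\min_{\theta\in\mathbb{R}}\|xe^{i\theta}-z\|_2^2=2(n-|z^*x|)\le 144\sigma^2.\]
   Context: For $z\in\mathbb{C}^n$ with unit-modulus entries, a matrix $W\in\mathbb{C}^{n\times n}$ is called $z$-discordant if it is Hermitian and satisfies both $\|W\|_{\mathrm{op}}\le 3\sqrt{n}$ (operator norm = largest singular value) and $\|Wz\|_\infty\le 3\sqrt{n\log n}$, with $\log$ the natural logarithm. *)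

(* Defs.v *)
From HB Require Import structures.
From mathcomp Require Import all_boot all_order all_algebra.
From mathcomp Require Import complex.
Notation normc := ComplexField.Normc.normc.
From mathcomp Require Import all_classical all_reals.
From mathcomp Require Import exp trigo.
Set Implicit Arguments. Unset Strict Implicit. Unset Printing Implicit Defensive.
Import Order.TTheory GRing.Theory Num.Theory.
Local Open Scope ring_scope.
Local Open Scope classical_set_scope.

Section Defs.
Variable R : realType.

Definition ctrmx m n (A : 'M[R[i]]_(m, n)) : 'M[R[i]]_(n, m) :=
  (map_mx Num.conj A)^T.

Definition hermitian n (W : 'M[R[i]]_n) : Prop := ctrmx W = W.

Definition vnorm2 n (v : 'cV[R[i]]_n) : R :=
  Num.sqrt (\sum_(i < n) (normc (v i 0)) ^+ 2).

Definition vnorminf n (v : 'cV[R[i]]_n) : R :=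
  \big[Num.max/0]_(i < n) normc (v i 0).

Definition opnorm n (W : 'M[R[i]]_n) : R :=
  sup [set vnorm2 (W *m v) | v in [set v : 'cV[R[i]]_n | vnorm2 v = 1]].

Definition unit_modulus n (z : 'cV[R[i]]_n) : Prop :=
  forall i, normc (z i 0) = 1.

Definition discordant n (z : 'cV[R[i]]_n) (W : 'M[R[i]]_n) : Prop :=
  [/\ hermitian W,
      opnorm W <= 3 * Num.sqrt (n%:R) &
      vnorminf (W *m z) <= 3 * Num.sqrt (n%:R * ln (n%:R))].

Definition qform n (C : 'M[R[i]]_n) (x : 'cV[R[i]]_n) : R[i] :=
  (ctrmx x *m C *m x) 0 0.

Definition cdot n (z x : 'cV[R[i]]_n) : R[i] := (ctrmx z *m x) 0 0.

Definition expi (t : R) : R[i] := (cos t +i* sin t)%C.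

End Defs.

(* Main.v *)
Require Import Defs.
From HB Require Import structures.
From mathcomp Require Import all_boot all_order all_algebra.
From mathcomp Require Import complex.
From mathcomp Require Import all_classical all_reals.
From mathcomp Require Import exp trigo.
From mathcomp Require Import ring lra.
Import Order.TTheory GRing.Theory Num.Theory.
Set Implicit Arguments. Unset Strict Implicit. Unset Printing Implicit Defensive.
Local Open Scope ring_scope.
Local Notation Re := complex.Re.
Local Notation Im := complex.Im.

Section Helpers.
Variable R : realType.
Local Notation C := R[i].
Local Notation normc := (ComplexField.Normc.normc).

Lemma conjE (x : C) : Num.conj x = conjc x.
Proof.
have [->|x0] := eqVneq x 0; first by rewrite rmorph0 conjc0.
apply: (mulfI x0); rewrite -normCK.
by rewrite sqr_normc.
Qed.

Lemma ReD (a b : C) : Re (a + b) = Re a + Re b.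
Proof. case: a => ? ?; case: b => ? ?; by simpc. Qed.
Lemma ImD (a b : C) : Im (a + b) = Im a + Im b.
Proof. case: a => ? ?; case: b => ? ?; by simpc. Qed.
Lemma ReN (a : C) : Re (- a) = - Re a.
Proof. case: a => ? ?; by simpc. Qed.
Lemma ImN (a : C) : Im (- a) = - Im a.
Proof. case: a => ? ?; by simpc. Qed.
Lemma ReB (a b : C) : Re (a - b) = Re a - Re b.
Proof. by rewrite ReD ReN. Qed.
Lemma Re0 : Re (0 : C) = 0. Proof. by []. Qed.
Lemma Re_sum (I : Type) (r : seq I) (P : pred I) (F : I -> C) :
  Re (\sum_(i <- r | P i) F i) = \sum_(i <- r | P i) Re (F i).
Proof. exact: (big_morph _ ReD Re0). Qed.
Lemma ReJ (a : C) : Re (Num.conj a) = Re a.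
Proof. by rewrite conjE; case: a. Qed.
Lemma ReMJ (a b : C) : Re (Num.conj a * b) = Re a * Re b + Im a * Im b.
Proof. by rewrite conjE; case: a => a1 a2; case: b => b1 b2 /=; lra. Qed.
Lemma ReRM (k : R) (a : C) : Re ((k%:C)%C * a) = k * Re a.
Proof. by case: a => a1 a2 /=; lra. Qed.
Lemma ReR (k : R) : Re ((k%:C)%C : C) = k. Proof. by []. Qed.
Lemma normc2 (a : C) : normc a ^+ 2 = Re a ^+ 2 + Im a ^+ 2.
Proof. by case: a => a1 a2 /=; rewrite sqr_sqrtr // addr_ge0 ?sqr_ge0. Qed.
Lemma normcE' (a : C) : ((normc a)%:C)%C = `|a|.
Proof. case: a => ? ?; by simpc. Qed.
Lemma normc_ge0' (a : C) : 0 <= normc a.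
Proof. by case: a => a1 a2 /=; rewrite sqrtr_ge0. Qed.
Lemma Re_le_normc (a : C) : Re a <= normc a.
Proof.
case: a => a1 a2 /=. apply: (le_trans (ler_norm a1)).
rewrite -sqrtr_sqr; apply: ler_wsqrtr.
by rewrite lerDl sqr_ge0.
Qed.
Lemma normcRM (k : R) (a : C) : normc ((k%:C)%C * a) = `|k| * normc a.
Proof.
rewrite ComplexField.Normc.normcM; congr (_ * _).
by rewrite /= expr0n /= addr0 sqrtr_sqr.
Qed.
Lemma ImB (a b : C) : Im (a - b) = Im a - Im b.
Proof. by rewrite ImD ImN. Qed.

Definition nsq n (v : 'cV[C]_n) : R := \sum_(i < n) normc (v i 0) ^+ 2.

Lemma vnorm2E n (v : 'cV[C]_n) : vnorm2 v = Num.sqrt (nsq v). Proof. by []. Qed.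
Lemma nsq_ge0 n (v : 'cV[C]_n) : 0 <= nsq v.
Proof. by apply: sumr_ge0 => i _; rewrite sqr_ge0. Qed.
Lemma vnorm2_sq n (v : 'cV[C]_n) : vnorm2 v ^+ 2 = nsq v.
Proof. by rewrite sqr_sqrtr // nsq_ge0. Qed.
Lemma nsqE n (v : 'cV[C]_n) :
  nsq v = \sum_i (Re (v i 0) ^+ 2 + Im (v i 0) ^+ 2).
Proof. by apply: eq_bigr => i _; rewrite normc2. Qed.

Lemma cdotE n (a b : 'cV[C]_n) : cdot a b = \sum_i Num.conj (a i 0) * b i 0.
Proof. by rewrite /cdot !mxE; apply: eq_bigr => i _; rewrite !mxE. Qed.
Lemma Re_cdot n (a b : 'cV[C]_n) :
  Re (cdot a b) = \sum_i (Re (a i 0) * Re (b i 0) + Im (a i 0) * Im (b i 0)).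
Proof. by rewrite cdotE Re_sum; apply: eq_bigr => i _; rewrite ReMJ. Qed.

Lemma nsqB n (a b : 'cV[C]_n) : nsq (a - b) = nsq a + nsq b - 2 * Re (cdot b a).
Proof.
rewrite !nsqE Re_cdot mulr_sumr -big_split /= -sumrB; apply: eq_bigr => i _.
rewrite !mxE ReB ImB; ring.
Qed.
Lemma nsqD n (a b : 'cV[C]_n) : nsq (a + b) = nsq a + nsq b + 2 * Re (cdot b a).
Proof.
rewrite !nsqE Re_cdot mulr_sumr -!big_split /=; apply: eq_bigr => i _.
rewrite !mxE ReD ImD; ring.
Qed.

Lemma cdotDr n (a b c : 'cV[C]_n) : cdot a (b + c) = cdot a b + cdot a c.
Proof. by rewrite !cdotE -big_split; apply: eq_bigr => i _; rewrite mxE mulrDr. Qed.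
Lemma cdotBl n (a b c : 'cV[C]_n) : cdot (a - b) c = cdot a c - cdot b c.
Proof.
by rewrite !cdotE -sumrB; apply: eq_bigr => i _; rewrite !mxE rmorphB mulrBl.
Qed.
Lemma cdotZr n (a b : 'cV[C]_n) k : cdot a (k *: b) = k * cdot a b.
Proof. by rewrite !cdotE mulr_sumr; apply: eq_bigr => i _; rewrite mxE mulrCA. Qed.
Lemma cdotZl n (a b : 'cV[C]_n) k : cdot (k *: a) b = Num.conj k * cdot a b.
Proof.
by rewrite !cdotE mulr_sumr; apply: eq_bigr => i _; rewrite mxE rmorphM mulrA.
Qed.
Lemma cdotC n (a b : 'cV[C]_n) : cdot b a = Num.conj (cdot a b).
Proof.
rewrite !cdotE rmorph_sum; apply: eq_bigr => i _.
by rewrite rmorphM /= conjCK mulrC.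
Qed.
Lemma cdot_herm n (W : 'M[C]_n) (a b : 'cV[C]_n) : Defs.hermitian W ->
  cdot a (W *m b) = Num.conj (cdot b (W *m a)).
Proof.
move=> hW; rewrite !cdotE rmorph_sum /=.
have E1 : forall i, Num.conj (a i 0) * (W *m b) i 0 =
    \sum_j Num.conj (a i 0) * (W i j * b j 0).
  by move=> i; rewrite mxE big_distrr.
have E2 : forall j, Num.conj (Num.conj (b j 0) * (W *m a) j 0) =
    \sum_i b j 0 * (Num.conj (W j i) * Num.conj (a i 0)).
  move=> j; rewrite mxE rmorphM /= conjCK rmorph_sum big_distrr /=.
  by apply: eq_bigr => i _; rewrite rmorphM.
rewrite (eq_bigr _ (fun i _ => E1 i)) (eq_bigr _ (fun j _ => E2 j)).
rewrite exchange_big /=; apply: eq_bigr => j _; apply: eq_bigr => i _.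
have -> : Num.conj (W j i) = W i j by rewrite -[in RHS]hW /ctrmx !mxE.
ring.
Qed.
Lemma mul_rank1 n (z v : 'cV[C]_n) : z *m ctrmx z *m v = cdot z v *: z.
Proof.
rewrite -mulmxA; apply/matrixP => i j.
by rewrite mxE big_ord1 (ord1 j) [in RHS]mxE mulrC.
Qed.
Lemma qformC n (z v : 'cV[C]_n) (s : R) (W : 'M[C]_n) :
  qform (z *m ctrmx z + (s%:C)%C *: W) v =
  ((normc (cdot z v) ^+ 2)%:C)%C + (s%:C)%C * cdot v (W *m v).
Proof.
rewrite /qform -mulmxA -/(cdot v _) mulmxDl mul_rank1 -scalemxAl cdotDr !cdotZr.
rewrite (cdotC z v) -normCK -normcE' rmorphXn //.
Qed.
Lemma Re_qformC n (z v : 'cV[C]_n) (s : R) (W : 'M[C]_n) :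
  Re (qform (z *m ctrmx z + (s%:C)%C *: W) v) =
  normc (cdot z v) ^+ 2 + s * Re (cdot v (W *m v)).
Proof. by rewrite qformC ReD ReR ReRM. Qed.
Lemma ReM (a b : C) : Re (a * b) = Re a * Re b - Im a * Im b.
Proof. by case: a => a1 a2; case: b => b1 b2. Qed.
Lemma nsqZ n (v : 'cV[C]_n) k : nsq (k *: v) = normc k ^+ 2 * nsq v.
Proof.
rewrite /nsq mulr_sumr; apply: eq_bigr => i _.
by rewrite mxE ComplexField.Normc.normcM exprMn.
Qed.
Lemma normcR (k : R) : normc ((k%:C)%C : C) = `|k|.
Proof. by rewrite /= expr0n /= addr0 sqrtr_sqr. Qed.
Lemma nsqZR n (v : 'cV[C]_n) (k : R) : nsq ((k%:C)%C *: v) = k ^+ 2 * nsq v.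
Proof. by rewrite nsqZ normcR real_normK // num_real. Qed.
Lemma nsq0 n : nsq (0 : 'cV[C]_n) = 0.
Proof. by rewrite /nsq big1 // => i _; rewrite mxE ComplexField.Normc.normc0 expr0n. Qed.
Lemma nsq_eq0 n (v : 'cV[C]_n) : nsq v = 0 -> v = 0.
Proof.
move=> h; apply/matrixP => i j; rewrite (ord1 j) [RHS]mxE.
have := @psumr_eq0P _ _ _ (fun i => normc (v i 0) ^+ 2)
  (fun i _ => sqr_ge0 (normc (v i 0))) h i isT.
by move/eqP; rewrite sqrf_eq0 => /eqP /ComplexField.Normc.eq0_normc.
Qed.
Lemma normc_sum n (F : 'I_n -> C) : normc (\sum_i F i) <= \sum_i normc (F i).
Proof.
elim/big_rec2: _ => [|i y1 y2 _ h]; first by rewrite ComplexField.Normc.normc0.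
apply: le_trans (le_normcD _ _) _; exact: lerD.
Qed.
Lemma amgm n (a b : 'cV[C]_n) (t : R) : 0 < t ->
  2 * Re (cdot a b) <= t * nsq a + nsq b / t.
Proof.
move=> t0; rewrite Re_cdot !nsqE mulr_sumr mulr_sumr mulr_suml -big_split /=.
apply: ler_sum => i _.
set x1 := Re (a i 0); set x2 := Im (a i 0); set y1 := Re (b i 0); set y2 := Im (b i 0).
have E : t * (x1 ^+ 2 + x2 ^+ 2) + (y1 ^+ 2 + y2 ^+ 2) / t - 2 * (x1 * y1 + x2 * y2)
   = ((t * x1 - y1) ^+ 2 + (t * x2 - y2) ^+ 2) / t.
  by field; rewrite gt_eqF.
rewrite -subr_ge0 E divr_ge0 ?addr_ge0 ?sqr_ge0 //; exact: ltW.
Qed.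
Lemma opnorm_bdd n (W : 'M[C]_n) :
  has_ubound [set vnorm2 (W *m v) | v in [set v : 'cV[C]_n | vnorm2 v = 1]]%classic.
Proof.
exists (Num.sqrt (\sum_i (\sum_j normc (W i j)) ^+ 2)) => y [v /= hv <-].
rewrite vnorm2E; apply: ler_wsqrtr; apply: ler_sum => i _.
have hv1 : nsq v = 1 by rewrite -vnorm2_sq hv expr1n.
have hvj : forall j, normc (v j 0) <= 1.
  move=> j; have : normc (v j 0) ^+ 2 <= 1.
    rewrite -hv1 /nsq (bigD1 j) //= lerDl sumr_ge0 // => k _; exact: sqr_ge0.
  have := normc_ge0' (v j 0); nra.
have hi : normc ((W *m v) i 0) <= \sum_j normc (W i j).
  rewrite mxE; apply: le_trans (normc_sum _) _; apply: ler_sum => j _.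
  rewrite ComplexField.Normc.normcM.
  have := normc_ge0' (W i j); have := hvj j; have := normc_ge0' (v j 0); nra.
have := normc_ge0' ((W *m v) i 0); nra.
Qed.
Lemma opnorm_le n (W : 'M[C]_n) (L : R) (v : 'cV[C]_n) :
  opnorm W <= L -> nsq (W *m v) <= L ^+ 2 * nsq v.
Proof.
move=> hL; have [v0|vn0] := eqVneq (nsq v) 0.
  by rewrite (nsq_eq0 v0) mulmx0 nsq0 mulr0.
have q0 : 0 < nsq v by rewrite lt_def vn0 nsq_ge0.
set s := vnorm2 v.
have s0 : 0 < s by rewrite /s vnorm2E sqrtr_gt0.
have s2 : s ^+ 2 = nsq v by rewrite /s vnorm2_sq.
set w := ((s^-1)%:C)%C *: v.
have hw : vnorm2 w = 1.
  rewrite vnorm2E nsqZR -s2 exprVn mulVf ?sqrtr1 //.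
  by rewrite expf_neq0 // gt_eqF.
have hs : has_sup [set vnorm2 (W *m v) | v in [set v : 'cV[C]_n | vnorm2 v = 1]]%classic.
  split; last exact: opnorm_bdd.
  by exists (vnorm2 (W *m w)); exists w.
have := sup_upper_bound hs (ex_intro2 _ _ w hw erefl).
move=> /le_trans /(_ hL) hWL.
have hWw : nsq (W *m w) <= L ^+ 2.
  rewrite -vnorm2_sq; have := vnorm2_sq (W *m w).
  have : 0 <= vnorm2 (W *m w) by rewrite vnorm2E sqrtr_ge0.
  by move=> h0 _; have := le_trans h0 hWL; nra.
move: hWw; rewrite /w -scalemxAr nsqZR -s2 exprVn.
by rewrite mulrC ler_pdivrMr ?exprn_gt0.
Qed.
Lemma normc_expi (t : R) : normc (expi t) = 1.
Proof. by rewrite /expi /= cos2Dsin2 sqrtr1. Qed.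
Lemma phase (S : C) : exists t : R, Re (expi t * S) = normc S.
Proof.
have [p0|pn0] := eqVneq (normc S) 0.
  by exists 0; rewrite (ComplexField.Normc.eq0_normc p0) mulr0 ComplexField.Normc.normc0.
set p := normc S in pn0 *.
have p0 : 0 < p by rewrite lt_def pn0 normc_ge0'.
have hp2 : p ^+ 2 = Re S ^+ 2 + Im S ^+ 2 by rewrite /p normc2.
set a := Re S in hp2 *; set b := Im S in hp2 *.
have hab : -1 <= a / p <= 1.
  rewrite ler_pdivlMr // ler_pdivrMr // mulN1r mul1r.
  apply/andP; split; nra.
have [t [ct st]] : exists t, cos t = a / p /\ sin t = - b / p.
  have ca := acosK (x := a / p); rewrite in_itv /= hab in ca.
  have sa := sin_acos hab.
  have E : 1 - (a / p) ^+ 2 = (b / p) ^+ 2.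
    by rewrite !expr_div_n; apply/eqP; rewrite subr_eq -mulrDl addrC -hp2 mulfV // expf_neq0.
  rewrite E sqrtr_sqr in sa.
  have [b0|b0] := leP b 0.
    exists (acos (a / p)); split; first exact: ca.
    by rewrite sa ler0_norm ?mulNr // pmulr_lle0 ?invr_gt0.
  exists (- acos (a / p)); split; first by rewrite cosN ca.
  by rewrite sinN sa gtr0_norm ?mulNr // divr_gt0.
exists t; rewrite ReM /= ct st -/a -/b.
have -> : a / p * a - - b / p * b = p ^+ 2 / p by rewrite hp2; field; rewrite pn0.
by rewrite expr2 mulfK.
Qed.
Lemma Re_le_normc' (a : C) : Re a <= normc a. Proof. exact: Re_le_normc. Qed.
Lemma cdot_self n (a : 'cV[C]_n) : cdot a a = ((nsq a)%:C)%C.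
Proof.
rewrite cdotE /nsq rmorph_sum; apply: eq_bigr => i _.
by rewrite -normCKC -normcE' rmorphXn.
Qed.
Lemma final_arith (N p s r B : R) : 0 < N -> 0 <= p -> 0 <= s ->
  N ^+ 2 - p ^+ 2 <= s * r -> B <= 9 * N * (2 * N + 2 * p) ->
  (forall t, 0 < t -> 2 * r <= t * (2 * N - 2 * p) + B / t) ->
  2 * (N - p) <= 144 * s ^+ 2.
Proof.
move=> N0 p0 s0 hr hB ht.
have [hNp|hNp] := leP (N - p) 0; first by nra.
have [s00|sp] := eqVneq s 0.
  by move: hr; rewrite s00 mul0r => hr; nra.
have s1 : 0 < s by rewrite lt_def sp s0.
have Np : 0 < N + p by lra.
have t0 : 0 < (N + p) / (2 * s) by apply: divr_gt0; lra.
have h := ht _ t0.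
have e1 : (N + p) / (2 * s) * (2 * N - 2 * p) = (N ^+ 2 - p ^+ 2) / s.
  by field; rewrite sp.
have e2 : B / ((N + p) / (2 * s)) = B * (2 * s) / (N + p).
  by field; rewrite ?sp ?gt_eqF.
have e3 : B * (2 * s) / (N + p) <= 36 * N * s.
  rewrite ler_pdivrMr //; nra.
have h2 : 2 * r <= (N ^+ 2 - p ^+ 2) / s + 36 * N * s.
  by rewrite -e1; apply: (le_trans h); rewrite e2 lerD2l.
have e4 : s * ((N ^+ 2 - p ^+ 2) / s + 36 * N * s) = N ^+ 2 - p ^+ 2 + 36 * N * s ^+ 2.
  by field; rewrite sp.
have := ler_wpM2l (ltW s1) h2; rewrite e4 => h3.
have h4 : N ^+ 2 - p ^+ 2 <= 36 * N * s ^+ 2 by nra.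
have h5 : N * (N - p) <= N * (36 * s ^+ 2) by nra.
have := h5; rewrite ler_pM2l // => h6; nra.
Qed.
End Helpers.

Unset Implicit Arguments.
Theorem lemma5 (R : realType) (n : nat) (sigma : R)
    (z : 'cV[R[i]]_n) (W : 'M[R[i]]_n) (x : 'cV[R[i]]_n) :
  (2 <= n)%N -> 0 <= sigma ->
  unit_modulus z -> discordant z W ->
  let C := z *m ctrmx z + (sigma%:C)%C *: W in
  vnorm2 x ^+ 2 = n%:R ->
  qform C z <= qform C x ->
  let d := 2 * (n%:R - normc (cdot z x)) in
  [/\ (forall t : R, d <= vnorm2 (expi t *: x - z) ^+ 2),
      (exists t : R, vnorm2 (expi t *: x - z) ^+ 2 = d) &
      d <= 144 * sigma ^+ 2].
Proof.
move=> n2 sig0 hz [hW hop hinf] C hx hq d.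
set N : R := n%:R.
have N0 : 0 < N by rewrite /N ltr0n; apply: leq_trans n2.
have hnz : nsq z = N.
  rewrite /nsq (eq_bigr (fun _ => 1)) => [|i _]; last by rewrite hz expr1n.
  by rewrite sumr_const card_ord.
have hnx : nsq x = N by rewrite -vnorm2_sq.
set S := cdot z x; set p := normc S.
have [t0 ht0] := phase S.
set y := expi t0 *: x.
have hny : nsq y = N by rewrite nsqZ normc_expi expr1n mul1r.
have hRezy : Re (cdot z y) = p by rewrite cdotZr ht0.
have dist : forall t, vnorm2 (expi t *: x - z) ^+ 2 = 2 * N - 2 * Re (expi t * S).
  move=> t; rewrite vnorm2_sq nsqB nsqZ normc_expi expr1n mul1r hnx hnz cdotZr.
  rewrite -/S; lra.
split.
- move=> t; rewrite dist /d -/S -/p -/N.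
  have := Re_le_normc (expi t * S).
  rewrite ComplexField.Normc.normcM normc_expi mul1r -/p; lra.
- by exists t0; rewrite dist ht0 /d -/S -/p -/N; lra.
rewrite /d -/S -/p -/N.
move: hq; rewrite /C lecE => /andP [_]; rewrite !Re_qformC -/S -/p.
rewrite cdot_self hnz normcR ger0_norm ?(ltW N0) // => hq.
have hQy : Re (cdot y (W *m y)) = Re (cdot x (W *m x)).
  rewrite /y -scalemxAr cdotZl cdotZr mulrA -normCKC -normcE' normc_expi.
  by rewrite rmorph1 expr1n mul1r.
set r := Re (cdot (y - z) (W *m (y + z))).
have hr : Re (cdot y (W *m y)) - Re (cdot z (W *m z)) = r.
  rewrite /r mulmxDr cdotDr !cdotBl !ReD !ReN (cdot_herm y z hW) ReJ; lra.
have hnyz : nsq (y - z) = 2 * N - 2 * p by rewrite nsqB hny hnz hRezy; lra.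
have hnyz' : nsq (y + z) = 2 * N + 2 * p.
  rewrite nsqD hny hnz.
  have -> : Re (cdot z y) = p by [].
  lra.
have hB := opnorm_le (y + z) hop.
rewrite exprMn sqr_sqrtr ?(ltW N0) // hnyz' in hB.
apply: (final_arith (r := r) (B := nsq (W *m (y + z)))).
- exact: N0.
- exact: normc_ge0'.
- exact: sig0.
- nra.
- lra.
- move=> t tp; have := amgm (y - z) (W *m (y + z)) tp.
  by rewrite hnyz.
Qed.
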